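(* Let $R$ be a ring and $\mathfrak p\subset R$ a prime ideal. If $R$ is purely $F$-regular along $\mathfrak p$, then the polynomial ring $R[t]$ is purely $F$-regular along the prime ideal $\mathfrak p[t]=\mathfrak pR[t]$.
   Context: All rings are noetherian $F$-finite commutative $\mathbb F_p$-algebras. $F^e_*R$ is $R$ viewed as an $R$-module via $r\mapsto r^{p^e}$; $\mathcal C_{e,R}=\operatorname{Hom}_R(F^e_*R,R)$. For an ideal $\mathfrak a$, $\phi\in\mathcal C_{e,R}$ is $\mathfrak a$-compatible if $\phi(F^e_*\mathfrak a)\subseteq\mathfrak a$. For a prime $\mathfrak p\subset R$, $R$ is purely $F$-regular along $\mathfrak p$ if (i) there exist $e>0$ and a $\mathfrak p$-compatible $\phi\in\mathcal C_{e,R}$ with $\phi(F^e_*R)\not\subseteq\mathfrak p$, and (ii) every proper ideal $\mathfrak b\subsetneq R$ that is $\phi$-compatible for every $e>0$ and every $\mathfrak p$-compatible $\phi\in\mathcal C_{e,R}$ satisfies $\mathfrak b\subseteq\mathfrak p$. *)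

(* Defs.v *)
From HB Require Import structures.
From mathcomp Require Import all_boot all_order all_algebra.
Set Implicit Arguments. Unset Strict Implicit. Unset Printing Implicit Defensive.
Import GRing.Theory.
Local Open Scope ring_scope.

Definition is_ideal (R : comNzRingType) (I : R -> Prop) : Prop :=
  I 0 /\ (forall x y, I x -> I y -> I (x + y)) /\ (forall r x, I x -> I (r * x)).

Definition proper_ideal (R : comNzRingType) (I : R -> Prop) : Prop :=
  is_ideal I /\ ~ I 1.

Definition prime_ideal (R : comNzRingType) (I : R -> Prop) : Prop :=
  proper_ideal I /\ (forall x y, I (x * y) -> I x \/ I y).

Definition fin_gen_ideal (R : comNzRingType) (I : R -> Prop) : Prop :=
  exists s : seq R, forall x, I x <->
    exists c : seq R, x = \sum_(i < size s) c`_i * s`_i.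

Definition noetherian (R : comNzRingType) : Prop :=
  forall I : R -> Prop, is_ideal I -> fin_gen_ideal I.

(* F-finite: F_* R is a finitely generated R-module
   (the R-action on F_* R being r . x = r^p x). *)
Definition F_finite (p : nat) (R : comNzRingType) : Prop :=
  exists s : seq R, forall x : R,
    exists c : seq R, x = \sum_(i < size s) (c`_i) ^+ p * s`_i.

(* phi is an element of C_{e,R} = Hom_R(F^e_* R, R) *)
Definition cartier_map (p e : nat) (R : comNzRingType) (phi : R -> R) : Prop :=
  (forall x y, phi (x + y) = phi x + phi y) /\
  (forall r x, phi (r ^+ (p ^ e) * x) = r * phi x).

Definition compatible (R : comNzRingType) (I : R -> Prop) (phi : R -> R) : Prop :=
  forall x, I x -> I (phi x).

Definition purely_F_regular_along (p : nat) (R : comNzRingType) (P : R -> Prop) : Prop :=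
  prime_ideal P /\
  (exists (e : nat) (phi : R -> R), (0 < e)%N /\ cartier_map p e phi /\
      compatible P phi /\ exists x, ~ P (phi x)) /\
  (forall b : R -> Prop, proper_ideal b ->
     (forall (e : nat) (phi : R -> R), (0 < e)%N -> cartier_map p e phi ->
        compatible P phi -> compatible b phi) ->
     forall x, b x -> P x).

(* the extended ideal P[t] = P R[t]: polynomials with all coefficients in P *)
Definition poly_ext (R : comNzRingType) (P : R -> Prop) : {poly R} -> Prop :=
  fun q => forall i : nat, P q`_i.

(* Main.v *)
Require Import Defs.
From HB Require Import structures.
From mathcomp Require Import all_boot all_order all_algebra.
From Stdlib Require Import Classical.
Set Implicit Arguments. Unset Strict Implicit. Unset Printing Implicit Defensive.
Import GRing.Theory.
Local Open Scope ring_scope.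

Lemma frobD (R : comNzRingType) p e (x y : R) : p \in [pchar R] ->
  (x + y) ^+ (p ^ e) = x ^+ (p ^ e) + y ^+ (p ^ e).
Proof.
move=> hp; apply: exprDn_pchar.
rewrite (eq_pnat _ (pcharf_eq hp)) pnatX pnat_id ?orbT //.
exact: (pcharf_prime hp).
Qed.

Lemma add0_phi (R : comNzRingType) (phi : R -> R) :
  (forall x y, phi (x + y) = phi x + phi y) -> phi 0 = 0.
Proof. by move=> h; apply: (@addrI _ (phi 0)); rewrite -h !addr0. Qed.

Definition Theta (R : comNzRingType) (q j : nat) (phi : R -> R) (g : {poly R}) :
  {poly R} := \poly_(k < size g) phi (g`_(k * q + j)).

Lemma coef_Theta (R : comNzRingType) q j phi (g : {poly R}) k :
  (0 < q)%N -> phi 0 = 0 -> (Theta q j phi g)`_k = phi (g`_(k * q + j)).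
Proof.
move=> q0 h0; rewrite coef_poly; case: ltnP => // hk.
rewrite nth_default // (leq_trans hk) //.
by rewrite (leq_trans (leq_pmulr _ q0)) ?leq_addr.
Qed.

Lemma Theta_cartier (R : comNzRingType) (p e j : nat) (phi : R -> R) :
  p \in [pchar R] -> (j < p ^ e)%N -> cartier_map p e phi ->
  cartier_map p e (Theta (p ^ e) j phi : {poly R} -> {poly R}).
Proof.
move=> hp hj [hadd hlin].
have q0 : (0 < p ^ e)%N by rewrite expn_gt0 prime_gt0 // (pcharf_prime hp).
have h0 := add0_phi hadd.
have hpP : p \in [pchar {poly R}] by rewrite pchar_poly.
split.
  by move=> x y; apply/polyP => k; rewrite coefD !coef_Theta // coefD hadd.
move=> h g; elim/poly_ind: h g => [|h c IH] g.
  by rewrite expr0n eqn0Ngt q0 /= !mul0r; apply/polyP=> k; rewrite coef_Theta // coef0 h0 ?coef0.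
rewrite (@frobD _ p e (h * 'X) (c%:P) hpP) exprMn mulrDl -mulrA -rmorphXn /=.
have -> : forall a b, Theta (p ^ e) j phi (a + b) = Theta (p ^ e) j phi a + Theta (p ^ e) j phi b.
  by move=> a b; apply/polyP => k; rewrite coefD !coef_Theta // coefD hadd.
rewrite IH mulrDl; congr (_ + _).
  rewrite -mulrA; congr (_ * _).
  apply/polyP => k; rewrite coefXM coef_Theta // coefXnM.
  case: k => [|k] /=; first by rewrite mul0n add0n hj h0.
  by rewrite coef_Theta // mulSn -addnA addKn ltnNge leq_addr.
by apply/polyP => k; rewrite coefCM !coef_Theta // coefCM hlin.
Qed.

Lemma Theta_compat (R : comNzRingType) (P : R -> Prop) q j (phi : R -> R) :
  (0 < q)%N -> phi 0 = 0 -> compatible P phi ->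
  compatible (poly_ext P) (Theta q j phi : {poly R} -> {poly R}).
Proof. by move=> q0 h0 hc g hg i; rewrite coef_Theta //; apply: hc. Qed.

Lemma Theta_C0 (R : comNzRingType) q (phi : R -> R) (a : R) :
  (0 < q)%N -> phi 0 = 0 -> Theta q 0 phi a%:P = (phi a)%:P.
Proof.
move=> q0 h0; apply/polyP => k; rewrite coef_Theta // !coefC addn0.
by case: k => [|k] //=; rewrite muln_eq0 /= eqn0Ngt q0.
Qed.

Lemma ideal_sum (R : comNzRingType) (P : R -> Prop) (I : Type) (r : seq I) F :
  is_ideal P -> (forall i, P (F i)) -> P (\sum_(i <- r) F i).
Proof.
move=> [h0 [hD _]] hF; elim: r => [|x r IH]; first by rewrite big_nil.
by rewrite big_cons; apply: hD.
Qed.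

Lemma poly_ext_ideal (R : comNzRingType) (P : R -> Prop) :
  is_ideal P -> is_ideal (poly_ext P).
Proof.
move=> hI; have [h0 [hD hM]] := hI; split; first by move=> i; rewrite coef0.
split; first by move=> x y hx hy i; rewrite coefD; apply: hD.
move=> r x hx i; rewrite coefM; apply: ideal_sum => // k.
exact: hM.
Qed.

Lemma min_ex (Q : nat -> Prop) : (exists n, Q n) ->
  exists n, Q n /\ forall m, (m < n)%N -> ~ Q m.
Proof.
move=> [n hn]; elim: n {-2}n (leqnn n) hn => [|N IH] n hn hQ.
  exists n; split => // m; rewrite (leqn0 _) in hn; by rewrite (eqP hn).
case: (classic (exists m, (m < n)%N /\ Q m)) => [[m [hm hQm]]|hno].
  apply: (IH m) => //; by rewrite -ltnS (leq_trans hm).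
by exists n; split => // m hm hQm; apply: hno; exists m.
Qed.

Lemma poly_ext_prime (R : comNzRingType) (P : R -> Prop) :
  prime_ideal P -> prime_ideal (poly_ext P).
Proof.
move=> [[hI h1] hpr]; have [h0 [hD hM]] := hI.
split; first split; first exact: poly_ext_ideal.
  by move=> h; apply: h1; have := h 0%N; rewrite coef1.
move=> f g hfg; apply: NNPP => hn.
have [hf hg] : ~ poly_ext P f /\ ~ poly_ext P g by split => h; apply: hn; tauto.
have [i [hi imin]] : exists i, ~ P f`_i /\ forall m, (m < i)%N -> ~ ~ P f`_m.
  apply: min_ex; apply: NNPP => h; apply: hf => k; apply: NNPP => hk; apply: h; by exists k.
have [j [hj jmin]] : exists j, ~ P g`_j /\ forall m, (m < j)%N -> ~ ~ P g`_m.
  apply: min_ex; apply: NNPP => h; apply: hg => k; apply: NNPP => hk; apply: h; by exists k.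
have := hfg (i + j)%N; rewrite coefM (bigD1 (inord i)) /=; last first.
  by [].
rewrite inordK ?ltnS ?leq_addr // addKn => hsum.
have hrest : P (\sum_(k < (i + j).+1 | k != inord i) f`_k * g`_(i + j - k)).
  rewrite big_mkcond /=; apply: ideal_sum => // k; case: ifP => // hk.
  have hki : (k : nat) != i.
    by apply/negP => /eqP e; move/negP: hk; apply; apply/eqP/val_inj; rewrite /= inordK ?e // ltnS leq_addr.
  case: (ltngtP k i) hki => // hlt _.
    have := imin _ hlt => /NNPP hPk; by rewrite mulrC; apply: hM.
  have hlt2 : (i + j - k < j)%N.
    by rewrite ltn_subLR ?ltn_add2r // -ltnS; case: k hk hlt => /= k.
  have := NNPP _ (jmin _ hlt2); exact: hM.
have : P (f`_i * g`_j).
  have := hD _ _ hsum (hM (-1) _ hrest).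
  by rewrite mulN1r addrK.
by case/hpr.
Qed.

Lemma cartier_comp (R : comNzRingType) p e e' (phi psi : R -> R) :
  cartier_map p e phi -> cartier_map p e' psi ->
  cartier_map p (e + e') (fun x => phi (psi x)).
Proof.
move=> [a1 l1] [a2 l2]; split; first by move=> x y; rewrite a2 a1.
by move=> r x; rewrite expnD exprM l2 l1.
Qed.

Definition Tn (R : comNzRingType) p (P : R -> Prop) n (y : R) : Prop :=
  forall e (phi : R -> R), (n <= e)%N -> (0 < e)%N -> cartier_map p e phi ->
    compatible P phi -> forall s, P (phi (s * y)).

Lemma Tn_ideal (R : comNzRingType) p (P : R -> Prop) n :
  is_ideal P -> is_ideal (Tn p P n).
Proof.
move=> [h0 [hD hM]]; split.
  move=> e phi _ _ [ha _] _ s; by rewrite mulr0 (add0_phi ha).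
split.
  move=> x y hx hy e phi h1 h2 hc hcp s; rewrite mulrDr (proj1 hc).
  by apply: hD; [exact: (hx e phi h1 h2 hc hcp s) | exact: (hy e phi h1 h2 hc hcp s)].
move=> r x hx e phi h1 h2 hc hcp s; rewrite mulrA; exact: (hx e phi h1 h2 hc hcp _).
Qed.

Lemma Tn_compat (R : comNzRingType) p (P : R -> Prop) n e' (phi : R -> R) :
  (0 < e')%N -> cartier_map p e' phi -> compatible P phi ->
  compatible (Tn p P n) phi.
Proof.
move=> he' hc hcp y hy e Phi h1 h2 hC hCp s.
rewrite -(proj2 hc).
have := hy (e + e')%N (fun x => Phi (phi x)); apply.
- exact: leq_trans h1 (leq_addr _ _).
- by rewrite addn_gt0 h2.
- exact: cartier_comp.
- by move=> x hx; apply: hCp; apply: hcp.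
Qed.

Lemma P_sub_Tn (R : comNzRingType) p (P : R -> Prop) n y :
  is_ideal P -> P y -> Tn p P n y.
Proof.
move=> [_ [_ hM]] hy e phi _ _ _ hc s; apply: hc; exact: hM.
Qed.

Lemma Tn_sub (R : comNzRingType) p (P : R -> Prop) :
  purely_F_regular_along p P -> forall n y, Tn p P n y -> P y.
Proof.
move=> [[[hI h1] _] [hex hreg]].
have key : forall n, (exists e phi x, (n <= e)%N /\ (0 < e)%N /\ cartier_map p e phi
   /\ compatible P phi /\ ~ P (phi x)) -> forall y, Tn p P n y -> P y.
  move=> n [e [phi [x [hn [he [hc [hcp hx]]]]]]].
  apply: hreg.
    split; first exact: Tn_ideal.
    move=> h1'; apply: hx; have := h1' e phi hn he hc hcp x; by rewrite mulr1.
  move=> e' psi he' hc' hcp'; exact: (@Tn_compat _ p P n e' psi he' hc' hcp').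
have C : forall n, exists e phi x, (n <= e)%N /\ (0 < e)%N /\ cartier_map p e phi
   /\ compatible P phi /\ ~ P (phi x).
  elim => [|n IH].
    have [e [phi [he [hc [hcp [x hx]]]]]] := hex.
    by exists e, phi, x.
  have hsub := key n IH.
  have [e [phi [x [hn [he [hc [hcp hx]]]]]]] := IH.
  have : ~ Tn p P n (phi x) by move/hsub.
  move=> hT; apply: NNPP => hno; apply: hT => e' Phi hn' he' hC hCp s.
  apply: NNPP => hP; apply: hno.
  exists (e' + e)%N, (fun z => Phi (phi z)), (s ^+ (p ^ e) * x); split.
    by rewrite -addn1 leq_add.
  split; first by rewrite addn_gt0 he' .
  split; first exact: cartier_comp.
  split; first by move=> z hz; apply: hCp; apply: hcp.
  by rewrite (proj2 hc).
move=> n; exact: key n (C n).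
Qed.

Theorem proposition2p15 (p : nat) (R : comNzRingType) (P : R -> Prop) :
  (p \in [pchar R])%R -> noetherian R -> F_finite p R ->
  purely_F_regular_along p P ->
  purely_F_regular_along p (poly_ext P).
Proof.
move=> hp _ _ hreg.
have hprime := pcharf_prime hp.
have [hPp [hex hii]] := hreg.
have [[hPI _] _] := hPp.
have [hP0 _] := hPI.
split; first exact: poly_ext_prime.
split.
  have [e [phi [he [hc [hcp [x hx]]]]]] := hex.
  have q0 : (0 < p ^ e)%N by rewrite expn_gt0 prime_gt0.
  have h0 := add0_phi (proj1 hc).
  exists e, (Theta (p ^ e) 0 phi); split => //; split.
    exact: Theta_cartier.
  split; first exact: Theta_compat.
  exists x%:P; rewrite Theta_C0 // => h; apply: hx; have := h 0%N; by rewrite coefC.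
move=> b [[hb0 [hbD hbM]] hb1] hbc f hf i.
apply: (@Tn_sub _ _ _ hreg (size f)) => e Phi hSe he hC hCp s.
have q0 : (0 < p ^ e)%N by rewrite expn_gt0 prime_gt0.
have h0 := add0_phi (proj1 hC).
have hqS : (size f < p ^ e)%N.
  exact: leq_ltn_trans hSe (ltn_expl e (prime_gt1 hprime)).
case: (ltnP i (p ^ e)) => hiq; last first.
  by rewrite nth_default ?mulr0 ?h0 // (leq_trans (ltnW hqS)).
have hg : b (s%:P * f) by apply: hbM.
have hT := hbc e (Theta (p ^ e) i Phi) he (Theta_cartier hp hiq hC)
   (@Theta_compat _ P (p ^ e) i Phi q0 h0 hCp) _ hg.
have eq : Theta (p ^ e) i Phi (s%:P * f) = (Phi (s * f`_i))%:P.
  apply/polyP => k; rewrite coef_Theta // coefCM coefC.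
  case: k => [|k] /=; first by rewrite mul0n add0n.
  rewrite nth_default ?mulr0 ?h0 //.
  by rewrite (leq_trans (ltnW hqS)) // (leq_trans (leq_pmull _ (ltn0Sn k))) ?leq_addr.
rewrite eq in hT.
apply: (hii (fun a => b a%:P)) hT.
  split; last by rewrite polyC1.
  split; first by rewrite polyC0.
  split; first by move=> x y hx hy; rewrite polyCD; apply: hbD.
  by move=> r x hx; rewrite polyCM; apply: hbM.
move=> e' phi he' hc hcp a ha.
have q0' : (0 < p ^ e')%N by rewrite expn_gt0 prime_gt0.
have h0' := add0_phi (proj1 hc).
have := hbc e' (Theta (p ^ e') 0 phi) he' (Theta_cartier hp q0' hc)
   (@Theta_compat _ P (p ^ e') 0 phi q0' h0' hcp) _ ha.
by rewrite Theta_C0.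
Qed.
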